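(* If $\langle A,\to\rangle$ is a conditional algebra, then its expanded Stone space $\langle\mathrm{Ul}(A),\tau_s,T_A\rangle$ is a conditional space.
   Context: A conditional algebra is a pair $\langle A,\to\rangle$ where $A$ is a Boolean algebra and $\to$ is a binary operation with, for all $a,b,c$: $a\to 1=1$; $(a\to b)\wedge(a\to c)=a\to(b\wedge c)$; $(a\vee b)\to c\le (a\to c)\wedge(b\to c)$. $\langle\mathrm{Ul}(A),\tau_s\rangle$ is the Stone space of $A$, $\varphi(a)=\{u:a\in u\}$; filters include the improper filter $A$, and $\varphi(F)=\{u:F\subseteq u\}$. $D^{\to}_X(Y)=\{b:\exists a\in Y,\ a\to b\in X\}$; $T_A(u,Z,v)$ iff there is a filter $F$ with $Z=\varphi(F)$ and $D^{\to}_u(F)\subseteq v$. A conditional space is a triple $\langle X,\tau,T\rangle$ where $\langle X,\tau\rangle$ is a Boolean (compact, Hausdorff, zero-dimensional) space and $T\subseteq X\times\mathcal{C}(\tau)\times X$ ($\mathcal{C}(\tau)$ the closed sets) satisfies: (T1) for every $x\in X$ and closed $Y$, $T(x,Y)=\{y:T(x,Y,y)\}$ is closed; (T2) for all clopen $U,V$, the set $U\to_T V=\{x:\text{for all } Z\subseteq U \text{ with } Z \text{ closed},\ T(x,Z)\subseteq V\}$ is clopen; (T3) for closed $Y$: $T(x,Y,y)$ iff $T(x,U,y)$ for every clopen $U\supseteq Y$. *)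

(* Defs.v *)
From HB Require Import structures.
From mathcomp Require Import all_boot all_order.
From mathcomp Require Import boolp classical_sets topology_structure
  compact separation_axioms.

Set Implicit Arguments.
Unset Strict Implicit.
Unset Printing Implicit Defensive.

Local Open Scope classical_set_scope.

Section ConditionalAlgebra.
Context {disp : Order.disp_t} {A : ctbDistrLatticeType disp}.

Definition conditional_algebra (imp : A -> A -> A) : Prop :=
  [/\ (forall a, imp a Order.top = Order.top),
      (forall a b c, Order.meet (imp a b) (imp a c) = imp a (Order.meet b c))
    & (forall a b c, (imp (Order.join a b) c
                      <= Order.meet (imp a c) (imp b c))%O)].

(* filters (the improper filter A is allowed) *)
Definition is_filter (F : set A) : Prop :=
  [/\ F Order.top,
      (forall a b, F a -> (a <= b)%O -> F b)
    & (forall a b, F a -> F b -> F (Order.meet a b))].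

Definition proper_filter (F : set A) : Prop := is_filter F /\ ~ F Order.bottom.

Definition is_ultrafilter (u : set A) : Prop :=
  proper_filter u /\ (forall F, proper_filter F -> u `<=` F -> F = u).

Record Ul := MkUl { uf_set :> set A; uf_prop : is_ultrafilter uf_set }.

HB.instance Definition _ := gen_eqMixin Ul.
HB.instance Definition _ := gen_choiceMixin Ul.

Definition phi (a : A) : set Ul := [set u : Ul | uf_set u a].
Definition phiF (F : set A) : set Ul := [set u : Ul | F `<=` uf_set u].

(* index type for the subbase {phi(a) | a in A} *)
Definition stone_index : Type := A.
HB.instance Definition _ := Choice.on stone_index.
HB.instance Definition _ := isPointed.Build stone_index (Order.top : A).

HB.instance Definition _ := isSubBaseTopological.Build Ul
  (@setT stone_index) (fun a : stone_index => phi a).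

Definition Dimp (imp : A -> A -> A) (X : set A) (Y : set A) : set A :=
  [set b | exists2 a, Y a & X (imp a b)].

Definition T_A (imp : A -> A -> A) (u : Ul) (Z : set Ul) (v : Ul) : Prop :=
  exists F : set A, [/\ is_filter F, Z = phiF F & Dimp imp (uf_set u) F `<=` uf_set v].

End ConditionalAlgebra.

Arguments Ul {disp} A.

Section ConditionalSpace.
Context {X : topologicalType}.

Definition clopen_base : Prop :=
  forall (U : set X) (x : X), open U -> U x ->
    exists V : set X, [/\ clopen V, V x & V `<=` U].

Definition boolean_space : Prop :=
  [/\ compact [set: X], hausdorff_space X & clopen_base].

Definition Tsec (T : X -> set X -> X -> Prop) (x : X) (Y : set X) : set X :=
  [set y | T x Y y].

Definition imp_T (T : X -> set X -> X -> Prop) (U V : set X) : set X :=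
  [set x | forall Z : set X, closed Z -> Z `<=` U -> Tsec T x Z `<=` V].

Definition conditional_space (T : X -> set X -> X -> Prop) : Prop :=
  [/\ boolean_space,
      (* T is a subset of X x C(tau) x X *)
      (forall x Y y, T x Y y -> closed Y),
      (forall x (Y : set X), closed Y -> closed (Tsec T x Y)),
      (forall U V : set X, clopen U -> clopen V -> clopen (imp_T T U V))
    &
      (forall (Y : set X), closed Y -> forall x y,
         T x Y y <-> (forall U : set X, clopen U -> Y `<=` U -> T x U y))].

End ConditionalSpace.

Arguments conditional_space : clear implicits.

(* Main.v *)
Require Import Defs.
From HB Require Import structures.
From mathcomp Require Import all_boot all_order.
From mathcomp Require Import boolp classical_sets topology_structure
  compact separation_axioms.
From mathcomp Require Import finmap.
Import Order.Theory.
Set Implicit Arguments.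
Unset Strict Implicit.
Unset Printing Implicit Defensive.
Local Open Scope classical_set_scope.

Section Alg.
Context {disp : Order.disp_t} {A : ctbDistrLatticeType disp}.
Implicit Types (a b c : A) (F G : set A).

Lemma disj_le_compl a b : Order.meet a b = Order.bottom -> (a <= Order.compl b)%O.
Proof. by move=> h; rewrite -disj_leC h. Qed.

Lemma filter_top F : is_filter F -> F Order.top.
Proof. by case. Qed.
Lemma filter_up F a b : is_filter F -> F a -> (a <= b)%O -> F b.
Proof. by case=> _ h _; apply: h. Qed.
Lemma filter_meet F a b : is_filter F -> F a -> F b -> F (Order.meet a b).
Proof. by case=> _ _ h; apply: h. Qed.

Definition genF F a : set A := [set c | exists2 f, F f & (Order.meet f a <= c)%O].

Lemma genF_filter F a : is_filter F -> is_filter (genF F a).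
Proof.
move=> fF; split.
- by exists Order.top; [exact: filter_top|rewrite lex1].
- by move=> c d [f Ff le1] le2; exists f => //; apply: le_trans le2.
- move=> c d [f Ff le1] [g Fg le2]; exists (Order.meet f g); first exact: filter_meet.
  rewrite lexI; apply/andP; split.
    by apply: le_trans le1; apply: leI2 => //; apply: leIl.
  by apply: le_trans le2; apply: leI2 => //; apply: leIr.
Qed.

Lemma genF_sub F a : is_filter F -> F `<=` genF F a.
Proof. by move=> fF f Ff; exists f => //; apply: leIl. Qed.

Lemma genF_in F a : is_filter F -> genF F a a.
Proof. by move=> fF; exists Order.top; [exact: filter_top|apply: leIr]. Qed.

Lemma uf_filter (u : Ul A) : is_filter u.
Proof. by case: u => ? [[]]. Qed.
Lemma uf_bot (u : Ul A) : ~ uf_set u Order.bottom.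
Proof. by case: u => ? [[]]. Qed.

Lemma uf_prime (u : Ul A) a : uf_set u a \/ uf_set u (Order.compl a).
Proof.
have [ua|nua] := pselect (uf_set u a); [by left|right].
case: u nua => U [[fU bU] maxU] /= nua.
have [fb|nfb] := pselect (genF U a Order.bottom).
  case: fb => f Uf; rewrite lex0 => /eqP h.
  by apply: filter_up fU Uf (disj_le_compl h).
have := maxU _ (conj (genF_filter a fU) nfb) (genF_sub a fU).
by move=> e; exfalso; apply: nua; rewrite -e; apply: genF_in.
Qed.

Lemma uf_compl (u : Ul A) a : uf_set u (Order.compl a) <-> ~ uf_set u a.
Proof.
split.
  move=> uc ua; have := filter_meet (uf_filter u) ua uc.
  by rewrite meetxC; apply: uf_bot.
by move=> nua; case: (uf_prime u a).
Qed.


Lemma uf_exists F : proper_filter F -> exists u : Ul A, F `<=` uf_set u.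
Proof.
move=> [fF nbF].
pose P := fun G : set A => proper_filter (F `|` G).
have chainP : forall C : set (set A), C `<=` P -> total_on C subset ->
    P (\bigcup_(X in C) X).
  move=> C CP tot.
  have key : forall a b, (F `|` \bigcup_(X in C) X) a ->
      (F `|` \bigcup_(X in C) X) b ->
      exists Z, [/\ P Z, (F `|` Z) a, (F `|` Z) b &
                 (F `|` Z) `<=` (F `|` \bigcup_(X in C) X)].
    have sub : forall Z, C Z -> (F `|` Z) `<=` (F `|` \bigcup_(X in C) X).
      by move=> Z CZ x [Fx|Zx]; [left|right; exists Z].
    move=> a b [Fa|[X CX Xa]] [Fb|[Y CY Yb]].
    - exists set0; split; [|by left|by left|].
        by rewrite /P setU0.
      by move=> x [Fx|//]; left.
    - by exists Y; split; [exact: CP|left|right|exact: sub].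
    - by exists X; split; [exact: CP|right|left|exact: sub].
    - have [XY|YX] := tot _ _ CX CY.
        by exists Y; split; [exact: CP|right; exact: XY|right|exact: sub].
      by exists X; split; [exact: CP|right|right; exact: YX|exact: sub].
  split; [split|].
  - by left; exact: filter_top.
  - move=> a b ha le.
    have [Z [[fZ _] Za _ sZ]] := key _ _ ha ha.
    by apply: sZ; apply: filter_up fZ Za le.
  - move=> a b ha hb.
    have [Z [[fZ _] Za Zb sZ]] := key _ _ ha hb.
    by apply: sZ; apply: filter_meet fZ Za Zb.
  - move=> hb; have [Z [[_ nZ] Zb _ _]] := key _ _ hb hb.
    exact: nZ.
have [M [PM maxM]] := Zorn_bigcup chainP.
have uU : is_ultrafilter (F `|` M).
  split=> // G [fG nG] sG.
  apply/seteqP; split=> //.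
  apply: contrapT => nGs.
  apply: (maxM G).
    split; first by move=> x Mx; apply: sG; right.
    move=> GM; apply: nGs => x Gx.
    by right; apply: GM.
  rewrite /P; have -> : F `|` G = G.
    by apply/setUidPr => x Fx; apply: sG; left.
  by [].
by exists (MkUl uU) => x Fx /=; left.
Qed.

Lemma uf_avoid F a : is_filter F -> ~ F a ->
  exists u : Ul A, F `<=` uf_set u /\ ~ uf_set u a.
Proof.
move=> fF nFa.
have pG : proper_filter (genF F (Order.compl a)).
  split; first exact: genF_filter.
  case=> f Ff; rewrite lex0 => /eqP h; apply: nFa.
  by apply: filter_up fF Ff _; rewrite -[a]complK; apply: disj_le_compl.
have [u su] := uf_exists pG.
exists u; split; first by move=> x Fx; apply: su; apply: genF_sub.
by apply/uf_compl; apply: su; apply: genF_in.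
Qed.

End Alg.

Section T.
Context {disp : Order.disp_t} {A : ctbDistrLatticeType disp}.
Implicit Types (F G : set A) (a b c : A).

Lemma seq_meet (x : Ul A) (s : seq A) : (forall j, j \in s -> uf_set x j) ->
  exists a, uf_set x a /\ forall j, j \in s -> (a <= j)%O.
Proof.
elim: s => [|h s IH] H.
  by exists Order.top; split=> //; apply: filter_top (uf_filter x).
have [a [xa le]] : exists a, uf_set x a /\ forall j, j \in s -> (a <= j)%O.
  by apply: IH => j js; apply: H; rewrite inE js orbT.
exists (Order.meet h a); split.
  by apply: filter_meet (uf_filter x) _ xa; apply: H; rewrite inE eqxx.
move=> j; rewrite inE => /orP [/eqP ->|js]; first exact: leIl.
by apply: le_trans (le _ js); exact: leIr.
Qed.

Lemma phi_open (a : A) : open (phi a).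
Proof.
rewrite /open /=; exists [set phi a]; last by rewrite bigcup_set1.
by move=> X /= ->; apply: (@finI_from1 stone_index).
Qed.

Lemma open_basic (x : Ul A) (B : set (Ul A)) : open B -> B x ->
  exists a, uf_set x a /\ phi a `<=` B.
Proof.
rewrite /open /= => -[D' sD' <-] [i D'i ix].
have := sD' _ D'i. case=> E _ eE.
move: ix. rewrite -eE => ix.
have [a [xa le]] : exists a, uf_set x a /\ forall j, j \in (E : seq A) -> (a <= j)%O.
  by apply: seq_meet => j jE; apply: (ix j).
exists a; split=> // y ya; exists i; first exact: D'i.
change (i y); rewrite -eE => j jE; apply: filter_up (uf_filter y) ya (le _ jE).
Qed.

Lemma nbhs_basic (x : Ul A) W : nbhs x W -> exists a, uf_set x a /\ phi a `<=` W.
Proof.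
rewrite nbhsE => -[B [oB Bx] BW].
have [a [xa sa]] := open_basic oB Bx.
by exists a; split=> // y /sa /BW.
Qed.

Lemma phi_nbhs (x : Ul A) a : uf_set x a -> nbhs x (phi a).
Proof. by move=> xa; rewrite nbhsE; exists (phi a) => //; split=> //; exact: phi_open. Qed.

Lemma phiC (a : A) : phi (Order.compl a) = ~` phi a.
Proof. by apply/seteqP; split=> y /=; rewrite /phi /= => /uf_compl. Qed.

Lemma phi_closed (a : A) : closed (phi a).
Proof. by rewrite -[a]complK phiC closedC; exact: phi_open. Qed.

Lemma phi_clopen (a : A) : clopen (phi a).
Proof. by split; [exact: phi_open|exact: phi_closed]. Qed.

Lemma closed_of (Y : set (Ul A)) :
  (forall x, ~ Y x -> exists a, uf_set x a /\ forall y, uf_set y a -> ~ Y y) ->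
  closed Y.
Proof.
move=> H x clx; apply: contrapT => nYx.
have [a [xa ha]] := H x nYx.
have [y [Yy ya]] := clx _ (phi_nbhs xa).
exact: ha ya Yy.
Qed.

Lemma phiF_closed (S : set A) : closed (phiF S).
Proof.
apply: closed_of => x nx.
have [c [Sc nxc]] : exists c, S c /\ ~ uf_set x c.
  apply: contrapT => h; apply: nx => c Sc; apply: contrapT => nxc.
  by apply: h; exists c.
exists (Order.compl c); split; first exact/uf_compl.
by move=> y /uf_compl yc hy; apply: yc; apply: hy.
Qed.

Definition FY (Y : set (Ul A)) : set A := [set a | Y `<=` phi a].

Lemma FY_filter Y : is_filter (FY Y).
Proof.
split.
- by move=> y _; apply: filter_top (uf_filter y).
- by move=> a b ha le y /ha ya; apply: filter_up (uf_filter y) ya le.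
- by move=> a b ha hb y Yy; apply: filter_meet (uf_filter y) (ha _ Yy) (hb _ Yy).
Qed.

Lemma closed_phiF Y : closed Y -> Y = phiF (FY Y).
Proof.
move=> cY; apply/seteqP; split.
  by move=> y Yy a ha; apply: ha.
move=> x hx; apply: cY => B nB.
apply: contrapT => hE.
have [a [xa sa]] := nbhs_basic nB.
have : FY Y (Order.compl a).
  move=> y Yy; apply/uf_compl => ya; apply: hE; exists y; split=> //.
  exact: sa.
by move=> /hx /uf_compl; apply.
Qed.

Lemma phi_sub F a : is_filter F -> phiF F `<=` phi a -> F a.
Proof.
move=> fF h; apply: contrapT => nFa.
have [u [su nua]] := uf_avoid fF nFa.
by apply: nua; apply: h.
Qed.

Lemma FY_phiF F : is_filter F -> FY (phiF F) = F.
Proof.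
move=> fF; apply/seteqP; split; first by move=> a /(phi_sub fF).
by move=> a Fa y hy; apply: hy.
Qed.

Lemma phiF_inj F G : is_filter F -> is_filter G -> phiF F = phiF G -> F = G.
Proof. by move=> fF fG e; rewrite -(FY_phiF fF) e FY_phiF. Qed.

Definition upset (a : A) : set A := [set c | (a <= c)%O].

Lemma upset_filter a : is_filter (upset a).
Proof.
split; rewrite /upset /=.
- exact: lex1.
- by move=> c d h1 h2; apply: le_trans h2.
- by move=> c d h1 h2; rewrite lexI h1 h2.
Qed.

Lemma phiF_upset a : phiF (upset a) = phi a.
Proof.
apply/seteqP; split=> y /=.
  by move=> h; apply: h; rewrite /upset /=.
by move=> ya c le; apply: filter_up (uf_filter y) ya le.
Qed.

Lemma Ul_ext (u v : Ul A) : uf_set u = uf_set v -> u = v.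
Proof.
case: u v => U pU [V pV] /= e; subst V.
by rewrite (Prop_irrelevance pU pV).
Qed.

Definition genFF (F G : set A) : set A :=
  [set c | exists f, exists g, [/\ F f, G g & (Order.meet f g <= c)%O]].

Lemma genFF_filter F G : is_filter F -> is_filter G -> is_filter (genFF F G).
Proof.
move=> fF fG; split.
- exists Order.top, Order.top; split; [exact: filter_top|exact: filter_top|exact: lex1].
- by move=> c d [f [g [Ff Gg le1]]] le2; exists f, g; split=> //; apply: le_trans le2.
- move=> c d [f [g [Ff Gg le1]]] [f' [g' [Ff' Gg' le2]]].
  exists (Order.meet f f'), (Order.meet g g'); split.
  + exact: filter_meet.
  + exact: filter_meet.
  + rewrite lexI; apply/andP; split.
      apply: le_trans le1; apply: leI2; exact: leIl.
    apply: le_trans le2; apply: leI2; exact: leIr.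
Qed.

Lemma clopen_phi (U : set (Ul A)) : clopen U -> exists a, U = phi a.
Proof.
move=> [oU cU].
have cUc : closed (~` U) by rewrite closedC.
have e1 := closed_phiF cU; have e2 := closed_phiF cUc.
have fH := genFF_filter (FY_filter U) (FY_filter (~` U)).
have [hb|nhb] := pselect (genFF (FY U) (FY (~` U)) Order.bottom).
  case: hb => f [g [Ff Gg]]; rewrite lex0 => /eqP h.
  exists f; apply/seteqP; split; first exact: Ff.
  move=> y yf; apply: contrapT => nUy.
  have yg := Gg _ nUy.
  have := filter_meet (uf_filter y) yf yg; rewrite h; exact: uf_bot.
have [u su] := uf_exists (conj fH nhb).
have uU : U u.
  rewrite e1 => a ha; apply: su; exists a, Order.top; split=> //.
    exact: filter_top (FY_filter _).
  by rewrite meetx1.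
have : (~` U) u.
  rewrite e2 => a ha; apply: su; exists Order.top, a; split=> //.
    exact: filter_top (FY_filter _).
  by rewrite meet1x.
by [].
Qed.

Lemma Ul_boolean : boolean_space (X := Ul A).
Proof.
split.
- rewrite compact_ultra => F UF _.
  pose u := [set a : A | F (phi a)].
  have phiT : phi (Order.top : A) = setT.
    by apply/seteqP; split=> // y _; apply: filter_top (uf_filter y).
  have phiI : forall a b : A, phi (Order.meet a b) = phi a `&` phi b.
    move=> a b; apply/seteqP; split=> y /=.
      move=> h; split; [apply: filter_up (uf_filter y) h _; exact: leIl|].
      apply: filter_up (uf_filter y) h _; exact: leIr.
    by case=> ya yb; apply: filter_meet (uf_filter y) ya yb.
  have phi0 : phi (Order.bottom : A) = set0.
    by apply/seteqP; split=> // y /= /uf_bot.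
  have fu : is_filter u.
    split; rewrite /u /=.
    - by rewrite phiT; exact: filterT.
    - move=> a b Fa le; apply: filterS Fa => y ya.
      exact: filter_up (uf_filter y) ya le.
    - by move=> a b Fa Fb; rewrite phiI; apply: filterI.
  have nbu : ~ u Order.bottom by rewrite /u /= phi0; exact: filter_not_empty.
  have uU : is_ultrafilter u.
    split=> // G [fG nG] sG; apply/seteqP; split=> // a Ga.
    have [//|Fc] := in_ultra_setVsetC (phi a) UF.
    exfalso; apply: nG.
    rewrite -(meetxC a); apply: filter_meet fG Ga _.
    by apply: sG; rewrite /u /= phiC.
  exists (MkUl uU); split=> //.
  move=> W /nbhs_basic [a [ua sa]].
  exact: filterS sa ua.
- move=> p q cl; apply: Ul_ext; apply/seteqP; split=> a ha; apply: contrapT => nh.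
  + have [y [/= ya yc]] := cl _ _ (phi_nbhs ha) (phi_nbhs (proj2 (uf_compl q a) nh)).
    by move/uf_compl: yc.
  + have [y [/= ya yc]] := cl _ _ (phi_nbhs (proj2 (uf_compl p a) nh)) (phi_nbhs ha).
    by move/uf_compl: ya.
- move=> U x oU Ux.
  have [a [xa sa]] := open_basic oU Ux.
  by exists (phi a); split=> //; exact: phi_clopen.
Qed.

End T.

Section C.
Context {disp : Order.disp_t} {A : ctbDistrLatticeType disp}.
Implicit Types (F G : set A) (a b c : A).
Context (imp : A -> A -> A) (CA : conditional_algebra imp).

Lemma imp_mono a c d : (c <= d)%O -> (imp a c <= imp a d)%O.
Proof.
case: CA => _ h2 _ le.
have -> : imp a c = Order.meet (imp a c) (imp a d).
  by rewrite h2; move/meet_idPl: le => ->.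
exact: leIr.
Qed.

Lemma imp_anti a a' c : (a <= a')%O -> (imp a' c <= imp a c)%O.
Proof.
case: CA => _ _ h3 le.
have := h3 a a' c; move/join_idPr: le => ->.
by move=> h; apply: le_trans h _; exact: leIl.
Qed.

Definition Dset (x : Ul A) a : set A := [set c | uf_set x (imp a c)].

Lemma Dset_filter x a : is_filter (Dset x a).
Proof.
case: CA => h1 h2 _; split; rewrite /Dset /=.
- by rewrite h1; exact: filter_top (uf_filter x).
- by move=> c d xc le; apply: filter_up (uf_filter x) xc (imp_mono a le).
- by move=> c d xc xd; rewrite -h2; apply: filter_meet (uf_filter x) xc xd.
Qed.

Lemma Dimp_upset x a : Dimp imp (uf_set x) (upset a) `<=` Dset x a.
Proof.
move=> c [a' le xa']; rewrite /Dset /=.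
exact: filter_up (uf_filter x) xa' (imp_anti c le).
Qed.

Lemma Dimp_mono X F G : F `<=` G -> Dimp imp X F `<=` Dimp imp X G.
Proof. by move=> s c [a Fa Xa]; exists a => //; apply: s. Qed.

Lemma Tsec_eq (x : Ul A) (Y : set (Ul A)) : closed Y ->
  Tsec (T_A imp) x Y = phiF (Dimp imp (uf_set x) (FY Y)).
Proof.
move=> cY; apply/seteqP; split=> y /=.
  by case=> F [fF -> sD]; rewrite FY_phiF.
move=> h; exists (FY Y); split; [exact: FY_filter|exact: closed_phiF|].
by move=> c /h.
Qed.

Lemma impT_eq a b :
  imp_T (T_A imp) (phi a) (phi b) = phi (imp a b).
Proof.
apply/seteqP; split=> x /=.
  move=> H; apply: contrapT => nx.
  have nD : ~ Dset x a b by [].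
  have [y [sy nyb]] := uf_avoid (Dset_filter x a) nD.
  apply: nyb; suff : phi b y by [].
  apply: (H (phi a) (phi_closed (a:=a)) (fun _ h => h) y).
  exists (upset a); split; [exact: upset_filter|by rewrite phiF_upset|].
  by move=> c /Dimp_upset /sy.
move=> xab Z cZ sZ y [F [fF eZ sD]].
rewrite /phi /=; apply: sD; exists a => //.
by apply: phi_sub fF _; rewrite -eZ.
Qed.

End C.

Theorem theorem5p4 (disp : Order.disp_t) (A : ctbDistrLatticeType disp)
  (imp : A -> A -> A) :
  conditional_algebra imp -> conditional_space (Ul A) (T_A imp).
Proof.
move=> CA; split.
- exact: Ul_boolean.
- by move=> x Y y [F [_ -> _]]; exact: phiF_closed.
- by move=> x Y cY; rewrite Tsec_eq //; exact: phiF_closed.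
- move=> U V cU cV.
  have [a ->] := clopen_phi cU; have [b ->] := clopen_phi cV.
  by rewrite impT_eq //; exact: phi_clopen.
- move=> Y cY x y; split.
  + case=> F [fF eY sD] U cU sYU.
    have [a eU] := clopen_phi cU; subst U.
    have Fa : F a by apply: phi_sub fF _; rewrite -eY.
    exists (upset a); split; [exact: upset_filter|by rewrite phiF_upset|].
    apply: subset_trans sD; apply: Dimp_mono => c le.
    exact: filter_up fF Fa le.
  + move=> H; exists (FY Y); split; [exact: FY_filter|exact: closed_phiF|].
    move=> c [a Ya xac].
    have [G [fG eG sD]] := H (phi a) (phi_clopen a) Ya.
    have eGa : G = upset a.
      by apply: phiF_inj fG (upset_filter a) _; rewrite -eG phiF_upset.
    by apply: sD; exists a => //; rewrite eGa /upset /=.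
Qed.
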